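(* Let $A_1=(1,0,-1)^8$ and $A_2=(0,1,-1,-1,3,-2,-2,5,-3,-3,7,-4,-4,9,-5,-5,11,-6,-6,13,-7,-7,15,-8)$ in $\mathbb{Z}^{24}$, let $a_1,a_2$ be integers, $A=a_1A_1+a_2A_2$, and let $m$ be an odd positive integer with $\gcd(a_1,a_2,m)=1$ and $\gcd(a_2,m)\in\{1,3\}$. Then the triangle $\nabla\big(\mathrm{IAP}(\pi_m(A),\pi_m(A)X_{24})[3\lambda m]\big)$ is balanced in $\mathbb{Z}/m\mathbb{Z}$ for every non-negative integer $\lambda$.
   Context: $\pi_m$ is reduction mod $m$; tuples are row vectors; $X_{24}=(\delta_{r,s}+\delta_{r,25-s})_{1\le r,s\le24}$. For $24$-tuples $A=(a_0,\dots,a_{23})$, $D=(d_0,\dots,d_{23})$, $\mathrm{IAP}(A,D)=(u_j)_{j\in\mathbb{Z}}$ with $u_{24q+r}=a_r+qd_r$. For a sequence $S=(u_j)_{j\in\mathbb{Z}}$, $S[n]=(u_0,\dots,u_{n-1})$. For a finite sequence $(u_0,\dots,u_{n-1})$, the triangle $\nabla(u_0,\dots,u_{n-1})$ is $(a_{i,j})_{i,j\ge0,i+j<n}$ with $a_{0,j}=u_j$ and $a_{i,j}=-a_{i-1,j}-a_{i-1,j+1}$ for $i\ge1$; it is balanced if every element of $\mathbb{Z}/m\mathbb{Z}$ occurs the same number of times among its entries. *)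

(* Defs.v *)
From mathcomp Require Import all_boot all_order all_algebra.
Set Implicit Arguments. Unset Strict Implicit. Unset Printing Implicit Defensive.
Import GRing.Theory Num.Theory.
Local Open Scope ring_scope.

(* Elements of Z/mZ are represented by integers, compared modulo m; an
   element of Z/mZ is a residue class k (0 <= k < m). *)

Definition A1 : seq int := flatten (nseq 8 [:: 1; 0; -1]).
Definition A2 : seq int :=
  [:: 0; 1; -1; -1; 3; -2; -2; 5; -3; -3; 7; -4; -4; 9; -5; -5; 11; -6;
      -6; 13; -7; -7; 15; -8].

Definition Avec (a1 a2 : int) (r : nat) : int :=
  a1 * nth 0 A1 r + a2 * nth 0 A2 r.

(* Row vector times X_24: (A X_24)_s = sum_r A_r (delta_{r,s} + delta_{r,25-s})
   (1-indexed), i.e. 0-indexed d_s = a_s + a_{23-s}. *)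
Definition X24 (r s : nat) : int :=
  ((r == s) : int) + ((r == 23 - s)%N : int).
Definition rowX24 (a : nat -> int) (s : nat) : int :=
  \sum_(r < 24) a r * X24 r s.

(* IAP(A,D) restricted to non-negative indices: u_{24q+r} = a_r + q d_r. *)
Definition IAP (a d : nat -> int) (j : nat) : int :=
  a (j %% 24)%N + (j %/ 24)%N%:Z * d (j %% 24)%N.

Fixpoint tri (u : nat -> int) (i j : nat) : int :=
  match i with
  | 0 => u j
  | i'.+1 => - tri u i' j - tri u i' j.+1
  end.

Definition tri_count (m : nat) (u : nat -> int) (n k : nat) : nat :=
  \sum_(i < n) \sum_(j < n - i) (((tri u i j - k%:Z) %% m%:Z)%Z == 0).

Definition balanced (m : nat) (u : nat -> int) (n : nat) : Prop :=
  forall k1 k2 : nat, (k1 < m)%N -> (k2 < m)%N ->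
    tri_count m u n k1 = tri_count m u n k2.

(* Main.v *)
Require Import Defs.
From mathcomp Require Import all_boot all_order all_algebra.
From mathcomp Require Import zify ring.
Import GRing.Theory Num.Theory.
Local Open Scope ring_scope.

Definition cc (r : nat) : int := if r == 0%N then 1 else if r == 1%N then 0 else -1.
Definition al (r : nat) : int := if r == 0%N then 0 else if r == 1%N then 1 else -1.
Definition be (r : nat) : int := if r == 0%N then -1 else if r == 1%N then 2 else -1.
Definition ep (r : nat) : int := if r == 0%N then 0 else if r == 1%N then -1 else 1.

Definition Uc (a1 a2 : int) (r t : nat) : int := a1 * cc r + a2 * (al r + be r * t%:Z).
Definition U (a1 a2 : int) (J : nat) : int := Uc a1 a2 (J %% 3) (J %/ 3).
Definition F (a1 a2 : int) (i J : nat) : int := U a1 a2 J - i%:Z * a2 * ep ((J + 1) %% 3).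

Lemma sum_delta (a : nat -> int) (s : nat) : (s < 24)%N ->
  \sum_(r < 24) a r * ((((r : nat) == s)%N : nat) : int) = a s.
Proof.
move=> Hs; rewrite (bigD1 (Ordinal Hs)) //= eqxx mulr1 big1 ?addr0 // => i.
by rewrite -val_eqE /= => /negbTE ->; rewrite mulr0.
Qed.

Lemma rowX24E (a : nat -> int) (s : nat) : (s < 24)%N -> rowX24 a s = a s + a (23 - s)%N.
Proof.
move=> Hs; rewrite /rowX24 /X24.
under eq_bigr do rewrite mulrDr.
rewrite big_split /= sum_delta // sum_delta //; lia.
Qed.

Lemma A_form a1 a2 r : (r < 24)%N ->
  Avec a1 a2 r = a1 * cc (r %% 3) + a2 * (al (r %% 3) + be (r %% 3) * (r %/ 3)%:Z)
  /\ Avec a1 a2 r + Avec a1 a2 (23 - r) = a2 * (8 * be (r %% 3)).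
Proof.
rewrite /Avec.
do 24?[case: r => [|r]; first by move=> _; split; rewrite /= /cc /al /be /divn /=; ring].
by [].
Qed.

Lemma u_closed a1 a2 J : IAP (Avec a1 a2) (rowX24 (Avec a1 a2)) J = U a1 a2 J.
Proof.
rewrite /IAP /U /Uc.
have Hr : (J %% 24 < 24)%N by rewrite ltn_mod.
rewrite rowX24E //.
have [-> ->] := A_form a1 a2 (J %% 24)%N Hr.
have -> : (J %% 3 = (J %% 24) %% 3)%N by lia.
have -> : (J %/ 3 = (J %/ 24) * 8 + (J %% 24) %/ 3)%N by lia.
rewrite PoszD PoszM; ring.
Qed.

Lemma F_step a1 a2 i J :
  - F a1 a2 i J - F a1 a2 i (J + 1) = F a1 a2 i.+1 (J + 2).
Proof.
rewrite /F /U /Uc.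
have := ltn_mod J 3; case Hr: (J %% 3)%N => [|[|[|?]]] // _.
- have -> : ((J + 1) %% 3 = 1)%N by lia.
  have -> : ((J + 1 + 1) %% 3 = 2)%N by lia.
  have -> : ((J + 2) %% 3 = 2)%N by lia.
  have -> : ((J + 2 + 1) %% 3 = 0)%N by lia.
  have -> : ((J + 1) %/ 3 = J %/ 3)%N by lia.
  have -> : ((J + 2) %/ 3 = J %/ 3)%N by lia.
  rewrite /cc /al /be /ep /= -[i.+1]addn1 PoszD; ring.
- have -> : ((J + 1) %% 3 = 2)%N by lia.
  have -> : ((J + 1 + 1) %% 3 = 0)%N by lia.
  have -> : ((J + 2) %% 3 = 0)%N by lia.
  have -> : ((J + 2 + 1) %% 3 = 1)%N by lia.
  have -> : ((J + 1) %/ 3 = J %/ 3)%N by lia.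
  have -> : ((J + 2) %/ 3 = J %/ 3 + 1)%N by lia.
  rewrite /cc /al /be /ep /= -[i.+1]addn1 !PoszD; ring.
- have -> : ((J + 1) %% 3 = 0)%N by lia.
  have -> : ((J + 1 + 1) %% 3 = 1)%N by lia.
  have -> : ((J + 2) %% 3 = 1)%N by lia.
  have -> : ((J + 2 + 1) %% 3 = 2)%N by lia.
  have -> : ((J + 1) %/ 3 = J %/ 3 + 1)%N by lia.
  have -> : ((J + 2) %/ 3 = J %/ 3 + 1)%N by lia.
  rewrite /cc /al /be /ep /= -[i.+1]addn1 !PoszD; ring.
Qed.

Lemma tri_closed a1 a2 i j :
  tri (IAP (Avec a1 a2) (rowX24 (Avec a1 a2))) i j = F a1 a2 i (j + 2 * i).
Proof.
elim: i j => [|i IH] j /=.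
  by rewrite u_closed /F muln0 addn0 mul0r mul0r subr0.
rewrite !IH.
have -> : (j + 2 * i.+1 = j + 2 * i + 2)%N by lia.
have -> : (j.+1 + 2 * i = j + 2 * i + 1)%N by lia.
by rewrite -F_step.
Qed.

Local Close Scope ring_scope.

Lemma shift3_sum (G : nat -> nat) L :
  (\sum_(i < L) G (i + 3)%N + (G 0 + G 1 + G 2) =
   \sum_(i < L) G i + (G L + G (L + 1) + G (L + 2)))%N.
Proof.
elim: L => [|L IH]; first by rewrite !big_ord0.
rewrite !big_ord_recr /=.
have e1 : (L.+1 + 1 = L + 2)%N by lia.
have e2 : (L.+1 + 2 = L + 3)%N by lia.
have e3 : (L.+1 = L + 1)%N by lia.
rewrite e1 e2 e3; move: IH; set s1 := (\sum_(i < L) G (i + 3))%N; set s2 := (\sum_(i < L) G i)%N; move: (G 0) (G 1) (G 2) (G L) (G (L+1)%N) (G (L+2)%N) (G (L+3)%N) => *; lia.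
Qed.

Lemma shift3_per (G : nat -> nat) L :
  G L = G 0 -> G (L + 1)%N = G 1 -> G (L + 2)%N = G 2 ->
  (\sum_(i < L) G (i + 3)%N = \sum_(i < L) G i)%N.
Proof.
move=> h0 h1 h2; have := shift3_sum G L; rewrite h0 h1 h2; lia.
Qed.

Lemma shift1_sum (G : nat -> nat) L :
  (\sum_(i < L) G (i + 1)%N + G 0 = \sum_(i < L) G i + G L)%N.
Proof.
elim: L => [|L IH]; first by rewrite !big_ord0.
rewrite !big_ord_recr /=; move: IH; set s1 := (\sum_(i < L) G (i + 1))%N; set s2 := (\sum_(i < L) G i)%N; rewrite addn1; lia.
Qed.

Local Open Scope ring_scope.

Definition cinv (m : nat) (P : int -> nat) :=
  forall K K', (m%:Z %| K - K')%Z -> P K = P K'.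

Lemma inv_gen m (P : int -> nat) d : cinv m P -> (forall K, P (K + d) = P K) ->
  forall K x z, (m%:Z %| x - d * z)%Z -> P (K + x) = P K.
Proof.
move=> cP hd.
have hn : forall K (k : nat), P (K + d * k%:Z) = P K.
  move=> K k; elim: k => [|k IH]; first by rewrite mulr0 addr0.
  by rewrite -addn1 PoszD mulrDr mulr1 addrA hd IH.
move=> K x z hx.
have -> : P (K + x) = P (K + d * z).
  by apply: cP; have -> : K + x - (K + d * z) = x - d * z by ring.
case: z {hx} => [k|k]; first by apply: hn.
rewrite NegzE mulrN.
by rewrite -{2}[K](addrNK (d * k.+1%:Z)) hn.
Qed.

Lemma telescope m (P Q1 Q2 : int -> nat) d : (0 < m)%N -> cinv m P ->
  (forall K, Q1 (K + d) = Q1 K) -> (forall K, Q2 (K + d) = Q2 K) ->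
  (forall K, (P (K - d)%R + Q1 K = P K + Q2 K)%N) -> forall K, Q1 K = Q2 K.
Proof.
move=> m0 cP h1 h2 hP K.
have hn : forall (Q : int -> nat), (forall K, Q (K + d) = Q K) ->
   forall k : nat, Q (K + d * k%:Z) = Q K.
  move=> Q hQ k; elim: k => [|k IH]; first by rewrite mulr0 addr0.
  by rewrite -addn1 PoszD mulrDr mulr1 addrA hQ IH.
have := eq_refl (\sum_(s < m) (P (K + d * s%:Z - d)%R + Q1 (K + d * s%:Z)%R)%N)%N.
rewrite {2}(eq_bigr (fun s : 'I_m => P (K + d * s%:Z)%R + Q2 (K + d * s%:Z)%R)%N);
  last by move=> s _; rewrite hP.
rewrite !big_split /=.
rewrite [X in (_ + X)%N == _](eq_bigr (fun _ => Q1 K)); last by move=> s _; rewrite (hn Q1 h1).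
rewrite [X in _ == (_ + X)%N](eq_bigr (fun _ => Q2 K)); last by move=> s _; rewrite (hn Q2 h2).
rewrite !sum_nat_const !card_ord.
case: m m0 cP => // m' _ cP.
rewrite big_ord_recl big_ord_recr /=.
have -> : P (K + d * 0%:Z - d) = P (K + d * m'%:Z).
  apply: cP; have -> : K + d * 0%:Z - d - (K + d * m'%:Z) = - (d * (m'.+1)%:Z).
    by rewrite -addn1 PoszD; ring.
  by rewrite rpredN dvdz_mull.
rewrite (eq_bigr (fun s : 'I_m' => P (K + d * s%:Z))); last first.
  move=> s _; congr P; rewrite /bump /= add1n -addn1 PoszD; ring.
move/eqP=> h.
have : (m'.+1 * Q1 K = m'.+1 * Q2 K)%N by lia.
by move/eqP; rewrite eqn_pmul2l // => /eqP.
Qed.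

Lemma F_shift a1 a2 i J k l :
  F a1 a2 (i + 3 * k)%N (J + 3 * l)%N =
  F a1 a2 i J + a2 * (be (J %% 3) * l%:Z - 3 * ep ((J + 1) %% 3) * k%:Z).
Proof.
rewrite /F /U /Uc.
have -> : ((J + 3 * l) %% 3 = J %% 3)%N by lia.
have -> : ((J + 3 * l) %/ 3 = J %/ 3 + l)%N by lia.
have -> : ((J + 3 * l + 1) %% 3 = (J + 1) %% 3)%N by lia.
rewrite !PoszD; ring.
Qed.

Definition h a1 a2 (m r : nat) (K : int) (i J : nat) : nat :=
  ((J %% 3 == r)%N && (m%:Z %| F a1 a2 i J - K)%Z).

Lemma h_cinv a1 a2 m r i J K K' : (m%:Z %| K - K')%Z ->
  h a1 a2 m r K i J = h a1 a2 m r K' i J.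
Proof.
move=> hK; rewrite /h; congr (nat_of_bool (_ && _)).
have -> : F a1 a2 i J - K = (F a1 a2 i J - K') - (K - K') by ring.
by rewrite rpredBr.
Qed.

Lemma h_gen a1 a2 m r K i J k l :
  h a1 a2 m r K (i + 3 * k)%N (J + 3 * l)%N =
  h a1 a2 m r (K - a2 * (be r * l%:Z - 3 * ep ((r + 1) %% 3) * k%:Z)) i J.
Proof.
rewrite /h F_shift.
have -> : ((J + 3 * l) %% 3 = J %% 3)%N by lia.
case: eqP => //= Hr.
have -> : ((J + 1) %% 3 = (r + 1) %% 3)%N by lia.
rewrite Hr.
by have -> : F a1 a2 i J + a2 * (be r * l - 3 * ep ((r + 1) %% 3) * k) - K =
  F a1 a2 i J - (K - a2 * (be r * l - 3 * ep ((r + 1) %% 3) * k)) by ring.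
Qed.

Definition C a1 a2 m n r K : nat :=
  (\sum_(i < n) \sum_(j < n - i) h a1 a2 m r K i (j + 2 * i))%N.
Definition Bcol a1 a2 m n r K : nat :=
  (\sum_(i < n) (h a1 a2 m r K i (2 * i) + h a1 a2 m r K i (1 + 2 * i)
                 + h a1 a2 m r K i (2 + 2 * i)))%N.
Definition Banti a1 a2 m n r K : nat :=
  (\sum_(i < n) (h a1 a2 m r K i (n + i) + h a1 a2 m r K i (n + i + 1)
                 + h a1 a2 m r K i (n + i + 2)))%N.

Lemma h_J3 a1 a2 m r K i J :
  h a1 a2 m r K i (J + 3)%N = h a1 a2 m r (K - a2 * be r) i J.
Proof.
have := h_gen a1 a2 m r K i J 0 1; rewrite addn0 muln1 => ->.
by congr h; rewrite mulr0 subr0 mulr1.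
Qed.

Lemma main_id a1 a2 m n r K :
  (C a1 a2 m n r (K - a2 * be r) + Bcol a1 a2 m n r K =
   C a1 a2 m n r K + Banti a1 a2 m n r K)%N.
Proof.
rewrite /C /Bcol /Banti -!big_split; apply: eq_bigr => i _ /=.
have := shift3_sum (fun j => h a1 a2 m r K i (j + 2 * i)) (n - i).
have Hi := ltn_ord i.
have e0 : forall c, (n - i + c + 2 * i = n + i + c)%N by move=> c; lia.
rewrite !e0 add0n.
have -> : (n - i + 2 * i = n + i)%N by lia.
have -> : (\sum_(j < n - i) h a1 a2 m r K i (j + 3 + 2 * i))%N =
          (\sum_(j < n - i) h a1 a2 m r (K - a2 * be r) i (j + 2 * i))%N.
  apply: eq_bigr => j _; rewrite -h_J3; congr h; lia.
by [].
Qed.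

Lemma line_inv a1 a2 m lam r (J0 : nat -> nat) l0 K :
  (forall i, J0 (i + 3) = J0 i + 3 * l0)%N ->
  (forall c, J0 (3 * lam * m + c) = J0 c + 3 * (l0 * lam * m))%N ->
  (\sum_(i < 3 * lam * m) h a1 a2 m r (K + a2 * (be r * l0%:Z - 3 * ep ((r + 1) %% 3) * 1%:Z)) i (J0 i) =
   \sum_(i < 3 * lam * m) h a1 a2 m r K i (J0 i))%N.
Proof.
move=> hJ hn.
set K0 := K + _.
have := shift3_per (fun i => h a1 a2 m r K0 i (J0 i)) (3 * lam * m).
have per : forall c, h a1 a2 m r K0 (3 * lam * m + c)%N (J0 (3 * lam * m + c)%N) =
                     h a1 a2 m r K0 c (J0 c).
  move=> c; rewrite hn.
  have -> : (3 * lam * m + c = c + 3 * (lam * m))%N by lia.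
  rewrite h_gen; apply: h_cinv.
  have -> : K0 - a2 * (be r * (l0 * lam * m)%N - 3 * ep ((r + 1) %% 3) * (lam * m)%N) - K0 =
     (m%:Z) * (- (a2 * lam%:Z * (be r * l0%:Z - 3 * ep ((r + 1) %% 3)))).
    rewrite !PoszM; ring.
  by apply: dvdz_mulr.
have p0 := per 0%N; rewrite addn0 in p0.
move=> /(_ p0 (per 1%N) (per 2%N)) <-.
apply: eq_bigr => i _; rewrite hJ.
have := h_gen a1 a2 m r K0 i (J0 i) 1 l0; rewrite muln1 => ->.
by rewrite /K0; congr h; ring.
Qed.

Lemma inv_a2 m (P : int -> nat) a2 e : odd m -> cinv m P ->
  (e = 1 \/ e = -1 \/ e = 2 \/ e = -2) ->
  (forall K, P (K + a2 * e) = P K) -> forall K w, P (K + a2 * w) = P K.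
Proof.
move=> om cP he hP K w.
have hm : (m./2 * 2 + 1 = m)%N.
  by rewrite -{2}(odd_double_half m) om muln2 addnC.
case: he hP => [->|[->|[->|->]]] hP.
- apply: (@inv_gen m P _ cP hP K (a2 * w) w).
  by have -> : a2 * w - a2 * 1 * w = 0 by ring.
- apply: (@inv_gen m P _ cP hP K (a2 * w) (- w)).
  by have -> : a2 * w - a2 * -1 * - w = 0 by ring.
- apply: (@inv_gen m P _ cP hP K (a2 * w) (w * (m./2 + 1)%N%:Z)).
  have -> : a2 * w - a2 * 2 * (w * (m./2 + 1)%N%:Z) =
     (m./2 * 2 + 1)%N%:Z * (- (a2 * w)).
    by rewrite !PoszD !PoszM; ring.
  by rewrite hm; apply: dvdz_mulr; apply: dvdzz.
- apply: (@inv_gen m P _ cP hP K (a2 * w) (- (w * (m./2 + 1)%N%:Z))).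
  have -> : a2 * w - a2 * -2 * - (w * (m./2 + 1)%N%:Z) =
     (m./2 * 2 + 1)%N%:Z * (- (a2 * w)).
    by rewrite !PoszD !PoszM; ring.
  by rewrite hm; apply: dvdz_mulr; apply: dvdzz.
Qed.

Lemma C_cinv a1 a2 m n r : cinv m (C a1 a2 m n r).
Proof.
move=> K K' hK; rewrite /C; apply: eq_bigr => i _; apply: eq_bigr => j _.
exact: h_cinv.
Qed.

Lemma Bcol_cinv a1 a2 m n r : cinv m (Bcol a1 a2 m n r).
Proof.
move=> K K' hK; rewrite /Bcol; apply: eq_bigr => i _.
by rewrite !(h_cinv _ _ _ _ _ _ _ _ hK).
Qed.

Lemma Banti_cinv a1 a2 m n r : cinv m (Banti a1 a2 m n r).
Proof.
move=> K K' hK; rewrite /Banti; apply: eq_bigr => i _.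
by rewrite !(h_cinv _ _ _ _ _ _ _ _ hK).
Qed.

Lemma Bcol_inv a1 a2 m lam r K :
  Bcol a1 a2 m (3 * lam * m) r (K + a2 * (be r * 2%:Z - 3 * ep ((r + 1) %% 3) * 1%:Z)) =
  Bcol a1 a2 m (3 * lam * m) r K.
Proof.
rewrite /Bcol !big_split /=.
rewrite (line_inv _ _ _ _ _ (fun i => 2 * i)%N); [|move=> *; lia|move=> *; lia].
rewrite (line_inv _ _ _ _ _ (fun i => 1 + 2 * i)%N); [|move=> *; lia|move=> *; lia].
rewrite (line_inv _ _ _ _ _ (fun i => 2 + 2 * i)%N); [|move=> *; lia|move=> *; lia].
by [].
Qed.

Lemma Banti_inv a1 a2 m lam r K :
  Banti a1 a2 m (3 * lam * m) r (K + a2 * (be r * 1%:Z - 3 * ep ((r + 1) %% 3) * 1%:Z)) =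
  Banti a1 a2 m (3 * lam * m) r K.
Proof.
rewrite /Banti !big_split /=.
rewrite (line_inv _ _ _ _ _ (fun i => 3 * lam * m + i)%N); [|move=> *; lia|move=> *; lia].
rewrite (line_inv _ _ _ _ _ (fun i => 3 * lam * m + i + 1)%N); [|move=> *; lia|move=> *; lia].
rewrite (line_inv _ _ _ _ _ (fun i => 3 * lam * m + i + 2)%N); [|move=> *; lia|move=> *; lia].
by [].
Qed.

Definition unitish (e : int) := e = 1 \/ e = -1 \/ e = 2 \/ e = -2.

Lemma unitish_vals r : (r < 3)%N ->
  [/\ unitish (be r * 2%:Z - 3 * ep ((r + 1) %% 3) * 1%:Z),
      unitish (be r * 1%:Z - 3 * ep ((r + 1) %% 3) * 1%:Z) &
      unitish (- be r)].
Proof. by case: r => [|[|[|]]] //= _; rewrite /unitish /be /ep /=; split; lia. Qed.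

Lemma C_inv a1 a2 m lam r : odd m -> (r < 3)%N ->
  forall K w, C a1 a2 m (3 * lam * m) r (K + a2 * w) = C a1 a2 m (3 * lam * m) r K.
Proof.
move=> om hr.
have m0 : (0 < m)%N by case: m om.
set n := (3 * lam * m)%N.
have [ecs eas ebe] := unitish_vals r hr.
have hB1 := inv_a2 _ _ _ _ om (Bcol_cinv a1 a2 m n r) ecs (Bcol_inv a1 a2 m lam r).
have hB2 := inv_a2 _ _ _ _ om (Banti_cinv a1 a2 m n r) eas (Banti_inv a1 a2 m lam r).
have hBB := telescope _ _ _ _ _ m0 (C_cinv a1 a2 m n r) (fun K => hB1 K (be r))
   (fun K => hB2 K (be r)) (main_id a1 a2 m n r).
apply: (inv_a2 _ _ _ _ om (C_cinv a1 a2 m n r) ebe) => K.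
have := main_id a1 a2 m n r K; rewrite hBB mulrN.
by move/eqP; rewrite eqn_add2r => /eqP.
Qed.


Lemma count_split a1 a2 m n (k : nat) :
  tri_count m (IAP (Avec a1 a2) (rowX24 (Avec a1 a2))) n k =
  (C a1 a2 m n 0 k%:Z + C a1 a2 m n 1 k%:Z + C a1 a2 m n 2 k%:Z)%N.
Proof.
rewrite /tri_count /C -!big_split; apply: eq_bigr => i _ /=.
rewrite -!big_split; apply: eq_bigr => j _ /=.
rewrite tri_closed /h.
set X := F a1 a2 i (j + 2 * i) - k%:Z.
have -> : ((X %% m%:Z)%Z == 0) = (m%:Z %| X)%Z.
  by apply/eqP/dvdz_mod0P.
have := ltn_mod (j + 2 * i) 3.
case: ((j + 2 * i) %% 3)%N => [|[|[|]]] // _; by case: (m%:Z %| X)%Z.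
Qed.

Lemma per3_sum (G : nat -> nat) q :
  (forall i, G (i + 3) = G i)%N -> (G 0 + G 1 + G 2 = 1)%N ->
  (\sum_(i < 3 * q) G i = q)%N.
Proof.
move=> hG h1.
have hG' : forall i k, G (i + 3 * k)%N = G i.
  move=> i k; elim: k => [|k IH]; first by rewrite muln0 addn0.
  have -> : (i + 3 * k.+1 = i + 3 * k + 3)%N by lia.
  by rewrite hG IH.
elim: q => [|q IH]; first by rewrite muln0 big_ord0.
have -> : (3 * q.+1 = (3 * q).+1.+1.+1)%N by lia.
rewrite !big_ord_recr /= IH.
have e0 := hG' 0%N q; have e1 := hG' 1%N q; have e2 := hG' 2%N q.
rewrite add0n in e0.
have -> : (3 * q).+1 = (1 + 3 * q)%N by rewrite add1n.
have -> : (3 * q).+2 = (2 + 3 * q)%N by rewrite add2n.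
rewrite e0 e1 e2; lia.
Qed.

Lemma one_residue (m : nat) (X : int) : (0 < m)%N ->
  (\sum_(K < m) (m%:Z %| (X - (K : nat)%:Z)%R)%Z)%N = 1%N.
Proof.
move=> m0.
have mz : m%:Z != 0 by rewrite -lt0n in m0 *; lia.
have hge := modz_ge0 X mz.
have hlt : (X %% m)%Z < m%:Z by apply: ltz_pmod; lia.
have ec : (X %% m)%Z = (absz (X %% m)%Z)%:Z by rewrite abszE ger0_norm.
have hc : (absz (X %% m)%Z < m)%N by rewrite -ltz_nat -ec.
have key : forall K : nat, (K < m)%N ->
    (m%:Z %| X - K%:Z)%Z = (K == absz (X %% m)%Z).
  move=> K hK; rewrite -eqz_mod_dvd (modz_small (m := K%:Z)); last first.
    by apply/andP; split; [|rewrite ltz_nat].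
  by rewrite ec eq_sym.
rewrite (bigD1 (Ordinal hc)) //= key // eqxx big1 ?addn0 // => K hK.
rewrite -val_eqE /= in hK.
by rewrite key ?ltn_ord // (negbTE hK).
Qed.

Definition Tc n r : nat := (\sum_(i < n) \sum_(j < n - i) ((j + 2 * i) %% 3 == r))%N.

Lemma sumC a1 a2 m n r : (0 < m)%N ->
  (\sum_(K < m) C a1 a2 m n r (K : nat)%:Z)%N = Tc n r.
Proof.
move=> m0; rewrite /C /Tc exchange_big; apply: eq_bigr => i _.
rewrite exchange_big; apply: eq_bigr => j _ /=.
rewrite /h; case: eqP => _ /=; last by rewrite big1.
exact: one_residue.
Qed.

Lemma Tc_eq n q s : n = (3 * q)%N -> (s < 2)%N -> Tc n s = Tc n s.+1.
Proof.
move=> hn hs; rewrite /Tc.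
have row : forall i : 'I_n,
  (\sum_(j < n - i) ((j + 2 * i) %% 3 == s) + ((2 * i) %% 3 == s.+1) =
   \sum_(j < n - i) ((j + 2 * i) %% 3 == s.+1) + ((n + i) %% 3 == s.+1))%N.
  move=> i; have := shift1_sum (fun j => ((j + 2 * i) %% 3 == s.+1)%N) (n - i).
  have -> : (n - i + 2 * i = n + i)%N by have := ltn_ord i; lia.
  rewrite add0n => <-; congr (_ + _)%N; apply: eq_bigr => j _.
  by apply/eqP/eqP; lia.
have sA : (\sum_(i < n) ((2 * i) %% 3 == s.+1))%N = q.
  have := per3_sum (fun i => ((2 * i) %% 3 == s.+1)%N) q; rewrite -hn; apply.
    by move=> i; apply/eqP/eqP; lia.
  have : s = 0%N \/ s = 1%N by lia.
  by case=> -> /=.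
have sB : (\sum_(i < n) ((n + i) %% 3 == s.+1))%N = q.
  have := per3_sum (fun i => ((n + i) %% 3 == s.+1)%N) q; rewrite -hn; apply.
    by move=> i; apply/eqP/eqP; lia.
  have : s = 0%N \/ s = 1%N by lia.
  by case=> -> /=; lia.
have := eq_refl (\sum_(i < n) (\sum_(j < n - i) ((j + 2 * i) %% 3 == s) + ((2 * i) %% 3 == s.+1)))%N.
rewrite {2}(eq_bigr _ (fun i _ => row i)) !big_split /= sA sB => /eqP.
by move/eqP; rewrite eqn_add2r => /eqP.
Qed.

Lemma F_mod3 a1 a2 i J : F a1 a2 i J - a1 * cc (J %% 3) =
  a2 * (al (J %% 3) + be (J %% 3) * (J %/ 3)%N%:Z - i%:Z * ep ((J + 1) %% 3)).
Proof. rewrite /F /U /Uc; ring. Qed.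

Theorem theorem16 (a1 a2 : int) (m : nat) :
  odd m ->
  gcdz (gcdz a1 a2) m%:Z = 1 ->
  (gcdz a2 m%:Z = 1 \/ gcdz a2 m%:Z = 3) ->
  forall lambda : nat,
    balanced m (IAP (Avec a1 a2) (rowX24 (Avec a1 a2))) (3 * lambda * m)%N.
Proof.
move=> om hg h2 lam k1 k2 hk1 hk2.
rewrite !count_split.
have m0 : (0 < m)%N by case: m om {hg h2 hk1 hk2}.
have Ci := fun r hr => C_inv a1 a2 m lam r om hr.
set n := (3 * lam * m)%N.
have [u [v huv]] := Bezoutz a2 m%:Z.
have stepg : forall r, (r < 3)%N -> forall K, C a1 a2 m n r (K + gcdz a2 m%:Z) = C a1 a2 m n r K.
  move=> r hr K; rewrite -(Ci r hr K u); apply: C_cinv.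
  have -> : K + gcdz a2 m%:Z - (K + a2 * u) = v * m%:Z by rewrite -huv; ring.
  by apply: dvdz_mull; apply: dvdzz.
have gen : forall r, (r < 3)%N -> forall K K', (gcdz a2 m%:Z %| K - K')%Z ->
    C a1 a2 m n r K = C a1 a2 m n r K'.
  move=> r hr K K' /dvdzP [q hq].
  have -> : K = K' + (K - K') by ring.
  apply: (inv_gen _ _ _ (C_cinv a1 a2 m n r) (stepg r hr) K' (K - K') q).
  by rewrite hq mulrC subrr dvdz0.
case: h2 => hg2.
  rewrite !(gen _ _ k1%:Z 0) ?hg2 ?dvd1z //.
  by rewrite !(gen _ _ k2%:Z 0) ?hg2 ?dvd1z.
have h3m : (3 %| m%:Z)%Z by rewrite -hg2 dvdz_gcdr.
have h3a2 : (3 %| a2)%Z by rewrite -hg2 dvdz_gcdl.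
have h3a1 : ~~ (3 %| a1)%Z.
  apply/negP => h.
  have : (3 %| gcdz (gcdz a1 a2) m%:Z)%Z by rewrite !dvdz_gcd h h3a2 h3m.
  by rewrite hg.
have h3mn : (3 %| m)%N by move: h3m; rewrite dvdzE.
set m' := (m %/ 3)%N.
have em : m = (3 * m')%N by rewrite /m' mulnC divnK.
have m'0 : (0 < m')%N by lia.
have zero : forall r, (r < 3)%N -> forall K, ~~ (3 %| K - a1 * cc r)%Z ->
    C a1 a2 m n r K = 0%N.
  move=> r hr K hK; rewrite /C big1 // => i _; rewrite big1 // => j _.
  rewrite /h; case: eqP => //= Hr; apply/eqP; rewrite eqb0; apply/negP => Hd.
  move/negP: hK; apply.
  have hF : (3 %| F a1 a2 i (j + 2 * i) - K)%Z by apply: dvdz_trans h3m Hd.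
  have := F_mod3 a1 a2 i (j + 2 * i); rewrite Hr => hF2.
  have -> : K - a1 * cc r = (F a1 a2 i (j + 2 * i) - a1 * cc r) -
                           (F a1 a2 i (j + 2 * i) - K) by ring.
  by rewrite rpredB // hF2 dvdz_mulr.
pose Z r := C a1 a2 m n r (a1 * cc r).
have form : forall r, (r < 3)%N -> forall K,
    C a1 a2 m n r K = ((3 %| (K - a1 * cc r)%R)%Z * Z r)%N.
  move=> r hr K; case: (boolP (3 %| K - a1 * cc r)%Z) => hd.
    by rewrite mul1n /Z; apply: gen; rewrite ?hg2.
  by rewrite mul0n zero.
have tot : forall r, (r < 3)%N -> Tc n r = (m' * Z r)%N.
  move=> r hr; rewrite -(sumC a1 a2 m n r m0).
  rewrite (eq_bigr (fun K : 'I_m => ((3 %| ((K : nat)%:Z - a1 * cc r)%R)%Z * Z r)%N));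
    last by move=> K _; rewrite form.
  rewrite -big_distrl /=; congr (_ * _)%N.
  have := per3_sum (fun K => (3 %| (K%:Z - a1 * cc r)%R)%Z : nat) m'.
  rewrite -em; apply.
    by move=> i; rewrite PoszD; congr nat_of_bool; apply/idP/idP; lia.
  by rewrite /=; lia.
have [e1 e2] : Tc n 0 = Tc n 1 /\ Tc n 1 = Tc n 2.
  by split; apply: (Tc_eq _ (lam * m)%N); rewrite /n ?mulnA.
have Z01 : Z 0%N = Z 1%N.
  by apply/eqP; rewrite -(eqn_pmul2l m'0) -!tot // e1.
have Z12 : Z 1%N = Z 2%N.
  by apply/eqP; rewrite -(eqn_pmul2l m'0) -!tot // e2.
have fin : forall k : nat, (C a1 a2 m n 0 k%:Z + C a1 a2 m n 1 k%:Z + C a1 a2 m n 2 k%:Z)%N = Z 0%N.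
  move=> k; rewrite !form // -Z12 -Z01 /cc /= mulr1 mulr0 mulrN1 subr0 opprK.
  rewrite -!mulnDl.
  have -> : ((3 %| (k%:Z - a1)%R)%Z + (3 %| k%:Z)%Z + (3 %| (k%:Z + a1)%R)%Z = 1)%N by lia.
  by rewrite mul1n.
by rewrite !fin.
Qed.
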